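(* Let $N\ge 1$ and $1\le K\le N$ be integers. A behavior $P\in\mathcal{L}_N$ is a vertex of the polytope $\mathcal{C}_{N,K}$ if and only if there is a $K$-junta $f:\{0,1\}^N\to\{0,1\}$ such that $P(a|\mathbf{x})=\delta_{a,f(\mathbf{x})}$ for all $a\in\{0,1\}$ and $\mathbf{x}\in\{0,1\}^N$. In particular, the vertices of $\mathcal{C}_{N,K}$ are in one-to-one correspondence with the $K$-juntas on $N$ variables, and their number is $$|V(\mathcal{C}_{N,K})|=\sum_{k=0}^K\binom{N}{k}\sum_{r=0}^k(-1)^{k-r}\binom{k}{r}2^{2^r}.$$
   Context: A behavior on $N$ input bits is a family $P=(P(a|\mathbf{x}))_{a\in\{0,1\},\mathbf{x}\in\{0,1\}^N}$ of real numbers with $P(a|\mathbf{x})\ge 0$ and $P(0|\mathbf{x})+P(1|\mathbf{x})=1$ for every $\mathbf{x}$; the set of all behaviors is $\mathcal{L}_N\subset\mathbb{R}^{2^{N+1}}$. $\mathcal{C}_{N,K}$ is the set of behaviors $P\in\mathcal{L}_N$ for which there exist non-negative weights $q_{j_1\cdots j_K}$ summing to one, indexed by $K$-tuples of pairwise distinct indices $j_1,\dots,j_K\in\{1,\dots,N\}$, and conditional probability distributions $P(a|x_{j_1}\cdots x_{j_K})$ on $a\in\{0,1\}$ depending only on the bits $x_{j_1},\dots,x_{j_K}$, such that $P(a|\mathbf{x})=\sum_{j_1,\dots,j_K}q_{j_1\cdots j_K}P(a|x_{j_1}\cdots x_{j_K})$ for all $a,\mathbf{x}$. It is a convex polytope.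 A Boolean function $f:\{0,1\}^N\to\{0,1\}$ is a $K$-junta if there is a subset $\{j_1,\dots,j_{N-K}\}\subseteq\{1,\dots,N\}$ of $N-K$ indices such that $f$ does not depend on $x_{j_k}$ for $k=1,\dots,N-K$ (i.e. $f$ depends on at most $K$ of its variables). *)

(* Defs.v *)
From HB Require Import structures.
From mathcomp Require Import all_boot all_order all_algebra.
From mathcomp Require Import reals.
Set Implicit Arguments. Unset Strict Implicit. Unset Printing Implicit Defensive.
Import Order.TTheory GRing.Theory Num.Theory.
Local Open Scope ring_scope.

Notation input N := {ffun 'I_N -> bool}.

Definition behavior (R : realType) (N : nat) := bool -> input N -> R.

Definition inL (R : realType) (N : nat) (P : behavior R N) : Prop :=
  (forall a x, 0 <= P a x) /\ (forall x, P false x + P true x = 1).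

Definition restr (N K : nat) (j : {ffun 'I_K -> 'I_N}) (x : input N)
  : {ffun 'I_K -> bool} := [ffun k => x (j k)].

Definition distinctIdx (N K : nat) (j : {ffun 'I_K -> 'I_N}) : bool :=
  injectiveb (fun k : 'I_K => j k).

Definition inC (R : realType) (N K : nat) (P : behavior R N) : Prop :=
  inL P /\
  exists (q : {ffun 'I_K -> 'I_N} -> R)
         (g : {ffun 'I_K -> 'I_N} -> bool -> {ffun 'I_K -> bool} -> R),
    (forall j, distinctIdx j ->
        0 <= q j /\ (forall a y, 0 <= g j a y) /\
        (forall y, g j false y + g j true y = 1)) /\
    \sum_(j | distinctIdx j) q j = 1 /\
    (forall a x, P a x = \sum_(j | distinctIdx j) q j * g j a (restr j x)).

(* Vertex of the convex polytope C_{N,K}, i.e. an extreme point: a point of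
   C_{N,K} that is not a proper convex combination of two distinct points. *)
Definition vertexC (R : realType) (N K : nat) (P : behavior R N) : Prop :=
  inC K P /\
  forall (P1 P2 : behavior R N) (t : R),
    inC K P1 -> inC K P2 -> 0 < t < 1 ->
    (forall a x, P a x = t * P1 a x + (1 - t) * P2 a x) ->
    forall a x, P1 a x = P2 a x.

Definition flip (N : nat) (x : input N) (j : 'I_N) : input N :=
  [ffun i => if i == j then ~~ x i else x i].

Definition junta (N K : nat) (f : {ffun input N -> bool}) : bool :=
  [exists J : {set 'I_N},
     (#|J| == N - K)%N && [forall j in J, forall x, f x == f (flip x j)]].

Definition detbeh (R : realType) (N : nat) (f : {ffun input N -> bool})
  : behavior R N := fun a x => if a == f x then 1 else 0.

(* Main.v *)
Require Import Defs.
From HB Require Import structures.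
From mathcomp Require Import all_boot all_order all_algebra.
From mathcomp Require Import reals.
From mathcomp Require Import zify ring lra.
Set Implicit Arguments. Unset Strict Implicit. Unset Printing Implicit Defensive.
Import Order.TTheory GRing.Theory Num.Theory.
Local Open Scope ring_scope.

Definition dep N (f : {ffun input N -> bool}) : {set 'I_N} :=
  [set i | [exists x, f x != f (flip x i)]].

Lemma flip_same N (x : input N) i j : j != i -> flip x i j = x j.
Proof. by rewrite /flip ffunE => /negbTE ->. Qed.

Lemma flip_diff N (x : input N) i : flip x i i = ~~ x i.
Proof. by rewrite /flip ffunE eqxx. Qed.

Lemma notdep N (f : {ffun input N -> bool}) i x : i \notin dep f -> f (flip x i) = f x.
Proof.
rewrite inE => /existsPn /(_ x); by rewrite negbK => /eqP ->.
Qed.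

Lemma agree N (f : {ffun input N -> bool}) (x x' : input N) :
  (forall i, i \in dep f -> x i = x' i) -> f x = f x'.
Proof.
suff H : forall n (x : input N), #|[set i | x i != x' i]| = n ->
   (forall i, i \in dep f -> x i = x' i) -> f x = f x' by move=> h; apply: (H _ x erefl h).
elim => [|n IH] y hc hy.
  have E := cards0_eq hc.
  suff -> : y = x' by [].
  apply/ffunP => i; apply/eqP; apply: contraT => hi.
  have : i \in [set i | y i != x' i] by rewrite inE.
  by rewrite E inE.
have : [set i | y i != x' i] != set0 by rewrite -card_gt0 hc.
case/set0Pn => i; rewrite inE => hi.
have hnd : i \notin dep f.
  by apply/negP => /hy /eqP; rewrite (negbTE hi).
rewrite -(notdep y hnd); apply: IH.
  have := cardsD1 i [set i | y i != x' i]; rewrite hc inE hi add1n => -[->].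
  apply: eq_card => j; rewrite !inE.
  case: (eqVneq j i) => [->|hji] /=.
    by rewrite flip_diff; case: (y i) (x' i) hi => [] [].
  by rewrite flip_same.
move=> j hj; rewrite flip_same ?hy //.
by apply: contraNneq hnd => <-.
Qed.

Definition ext N k (j : {ffun 'I_k -> 'I_N}) (y : {ffun 'I_k -> bool}) : input N :=
  [ffun i => [exists t, (j t == i) && y t]].

Lemma restr_ext N k (j : {ffun 'I_k -> 'I_N}) y : injective j -> restr j (ext j y) = y.
Proof.
move=> hj; apply/ffunP => t; rewrite /restr /ext !ffunE.
apply/existsP/idP => [[t' /andP[/eqP /hj -> //]]|ht].
by exists t; rewrite eqxx.
Qed.

Lemma recon N k (j : {ffun 'I_k -> 'I_N}) (f : {ffun input N -> bool}) x :
  (forall i, i \in dep f -> exists t, j t = i) -> f x = f (ext j (restr j x)).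
Proof.
move=> hc; apply: agree => i /hc [t <-].
rewrite /ext /restr ffunE; apply/idP/existsP => [h|[t' /andP[/eqP <-]]].
  by exists t; rewrite eqxx ffunE.
by rewrite ffunE.
Qed.

Lemma restr_flip N k (j : {ffun 'I_k -> 'I_N}) x i :
  (forall t, j t != i) -> restr j (flip x i) = restr j x.
Proof. by move=> h; apply/ffunP => t; rewrite /restr /flip !ffunE (negbTE (h t)). Qed.

Lemma card_sub N (S : {set 'I_N}) :
  #|[set f : {ffun input N -> bool} | dep f \subset S]| = (2 ^ (2 ^ #|S|))%N.
Proof.
pose j : {ffun 'I_#|S| -> 'I_N} := [ffun t => enum_val t].
have hj : injective j by move=> t1 t2; rewrite !ffunE => /enum_val_inj.
pose phi := fun g : {ffun {ffun 'I_#|S| -> bool} -> bool} => [ffun x => g (restr j x)].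
have phii : injective phi.
  move=> g1 g2 /ffunP h; apply/ffunP => y.
  by have := h (ext j y); rewrite !ffunE restr_ext.
have -> : [set f : {ffun input N -> bool} | dep f \subset S] = phi @: setT.
  apply/setP => f; rewrite inE; apply/idP/imsetP.
    move=> hs; exists [ffun y => f (ext j y)] => //.
    apply/ffunP => x; rewrite !ffunE; apply: recon => i hi.
    have hiS : i \in S by apply: (subsetP hs).
    by exists (enum_rank_in hiS i); rewrite ffunE enum_rankK_in.
  move=> [g _ ->]; apply/subsetP => i; rewrite inE => /existsP [x].
  apply: contraR => hi; rewrite !ffunE restr_flip //.
  move=> t; rewrite ffunE; apply: contraNneq hi => <-; exact: enum_valP.
rewrite card_imset // cardsT card_ffun card_ffun !card_bool card_ord.
by [].
Qed.

Lemma binC3 k t r : (r <= t <= k)%N ->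
  ('C(k,t) * 'C(t,r) = 'C(k,r) * 'C(k-r, t-r))%N.
Proof.
move=> /andP[hrt htk].
have hpos : (0 < r`! * (t-r)`! * (k-t)`!)%N by rewrite !muln_gt0 !fact_gt0.
apply/eqP; rewrite -(eqn_pmul2r hpos); apply/eqP.
have e1 := bin_fact htk. have e2 := bin_fact hrt.
have hrk : (r <= k)%N by apply: leq_trans htk.
have e3 := bin_fact hrk.
have htrkr : (t - r <= k - r)%N by apply: leq_sub2r.
have e4 := bin_fact htrkr.
have E : (k - r - (t - r) = k - t)%N by lia.
rewrite E in e4.
transitivity k`!.
  by rewrite -e1 -e2; ring.
by rewrite -e3 -e4; ring.
Qed.


Lemma inner k r : (r <= k)%N ->
  \sum_(t < k.+1) (('C(k,t) * 'C(t,r))%:R : int) * (-1)^+(t - r) = (r == k)%:R.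
Proof.
move=> hrk.
rewrite -(big_mkord xpredT (fun t => (('C(k,t) * 'C(t,r))%:R : int) * (-1)^+(t - r))).
rewrite (@big_cat_nat _ _ _ r) /=; [|by []|by rewrite ltnW].
rewrite big1_seq ?add0r; last first.
  move=> t /andP[_]; rewrite mem_index_iota => /andP[_ htr].
  by rewrite (bin_small htr) muln0 mul0r.
rewrite -{1}(add0n r) big_addn.
rewrite (eq_big_nat _ _ (F2 := fun s => ('C(k,r))%:R * (('C(k-r,s))%:R * (-1)^+s) : int)); last first.
  move=> s /andP[_ hs]; rewrite binC3; last (apply/andP; split; [by rewrite leq_addl|lia]).
  have -> : (s + r - r = s)%N by lia.
  by rewrite natrM mulrA.
rewrite -mulr_sumr subSn // big_mkord.
transitivity (('C(k,r))%:R * (-1 + 1 : int)^+(k-r)).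
  congr (_ * _); rewrite GRing.exprD1n; apply: eq_bigr => i _.
  by rewrite mulr_natl.
rewrite addNr expr0n.
have -> : ((k - r == 0%N) = (r == k))%N.
  apply/idP/idP => /eqP h; apply/eqP; lia.
case: eqP => [->|_]; last by rewrite mulr0.
by rewrite binn mulr1.
Qed.

Lemma binv (c : nat -> int) k :
  \sum_(t < k.+1) ('C(k,t))%:Z * \sum_(r < t.+1) ((-1)^+(t-r) * ('C(t,r))%:Z * c r) = c k.
Proof.
have E : forall t : 'I_k.+1, \sum_(r < t.+1) ((-1)^+(t-r) * ('C(t,r))%:Z * c r)
     = \sum_(r < k.+1) ((-1)^+(t-r) * ('C(t,r))%:Z * c r).
  move=> t; rewrite (big_ord_widen k.+1 (fun r => (-1)^+(t-r) * ('C(t,r))%:Z * c r) (ltn_ord t)).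
  rewrite big_mkcond; apply: eq_bigr => r _.
  case: ifP => // /negbT; rewrite -leqNgt => h.
  by rewrite bin_small // mulr0 mul0r.
rewrite (eq_bigr _ (fun t _ => congr1 _ (E t))).
under eq_bigr => t _ do rewrite mulr_sumr.
rewrite exchange_big /=.
rewrite (bigD1 ord_max) //= [X in _ + X]big1 ?addr0.
  rewrite (eq_bigr (fun t : 'I_k.+1 => c k * ((('C(k,t) * 'C(t,k))%:R : int) * (-1)^+(t - k)))).
    by rewrite -mulr_sumr inner // eqxx mulr1.
  by move=> t _; rewrite natrM !natz; ring.
move=> r hr.
rewrite (eq_bigr (fun t : 'I_k.+1 => c r * ((('C(k,t) * 'C(t,r))%:R : int) * (-1)^+(t - r)))).
  rewrite -mulr_sumr inner; last by rewrite -ltnS.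
  have -> : (r == k :> nat) = false.
    by apply/negbTE; move: hr; apply: contra => /eqP h; apply/eqP/val_inj.
  by rewrite mulr0.
by move=> t _; rewrite natrM !natz; ring.
Qed.

Lemma Posz_sum (I : finType) (P : pred I) (F : I -> nat) :
  ((\sum_(i | P i) F i)%N)%:Z = \sum_(i | P i) (F i)%:Z.
Proof. exact: (big_morph Posz PoszD (erefl (Posz 0))). Qed.

Definition bcnt N (T : {set 'I_N}) := #|[set f : {ffun input N -> bool} | dep f == T]|.

Lemma card_part N (P : pred {set 'I_N}) :
  #|[set f : {ffun input N -> bool} | P (dep f)]| = (\sum_(T | P T) bcnt T)%N.
Proof.
rewrite -sum1_card (partition_big (@dep N) P) => [|f]; last by rewrite inE.
apply: eq_bigr => T hT; rewrite /bcnt -sum1_card; apply: eq_bigl => f.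
by rewrite !inE; case: eqP => [->|]; [rewrite hT | rewrite andbF].
Qed.

Definition ecnt (k : nat) : int :=
  \sum_(r < k.+1) ((-1) ^+ (k - r) * ('C(k, r))%:Z * (2 ^ (2 ^ r))%:Z).

Lemma sum_by_card N (A : pred {set 'I_N}) m (F : nat -> int) :
  (forall T, A T -> #|T| <= m)%N ->
  \sum_(T | A T) F #|T| = \sum_(t < m.+1) (#|[set T | A T & #|T| == t]|)%:Z * F t.
Proof.
move=> hm; rewrite (partition_big (fun T : {set 'I_N} => (inord #|T| : 'I_m.+1)) xpredT) //.
apply: eq_bigr => t _.
rewrite (eq_bigr (fun _ => F t)); last first.
  by move=> T /andP[hA /eqP <-]; rewrite inordK // ltnS hm.
rewrite sumr_const -mulr_natl natz; congr (Posz _ * _).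
apply: eq_card => T; rewrite unfold_in /= inE.
case hA : (A T) => //=.
have hT : (#|T| < m.+1)%N by rewrite ltnS hm.
apply/eqP/eqP => [<-|h]; first by rewrite inordK.
by apply: val_inj; rewrite /= inordK.
Qed.

Lemma e_sum N (S : {set 'I_N}) :
  \sum_(T : {set 'I_N} | T \subset S) ecnt #|T| = (2 ^ (2 ^ #|S|))%:Z.
Proof.
rewrite (@sum_by_card N (fun T : {set 'I_N} => T \subset S) #|S|); last by move=> T; apply: subset_leq_card.
under eq_bigr => t _ do rewrite cards_draws.
exact: (binv (fun r => (2^(2^r))%:Z) #|S|).
Qed.

Lemma step N (S : {set 'I_N}) :
  (forall T : {set 'I_N}, T \proper S -> (bcnt T)%:Z = ecnt #|T|) -> (bcnt S)%:Z = ecnt #|S|.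
Proof.
move=> IH.
have h1 := congr1 Posz (card_part (fun T : {set 'I_N} => T \subset S)).
rewrite card_sub Posz_sum -(e_sum S) /= in h1.
rewrite (bigD1 S) //= [in RHS](bigD1 S) //= in h1.
have E : \sum_(T : {set 'I_N} | (T \subset S) && (T != S)) (bcnt T)%:Z =
         \sum_(T : {set 'I_N} | (T \subset S) && (T != S)) ecnt #|T|.
  apply: eq_bigr => T /andP[h1' h2]; apply: IH; by rewrite properEneq h2.
rewrite E in h1; exact: (esym (addIr _ h1)).
Qed.

Lemma bcnt_e N (S : {set 'I_N}) : (bcnt S)%:Z = ecnt #|S|.
Proof.
suff H : forall n (S : {set 'I_N}), (#|S| < n)%N -> (bcnt S)%:Z = ecnt #|S|.
  exact: (H _ S (ltnSn _)).
elim => [|n IH] S' hS //.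
apply: step => T hT; apply: IH.
by have := proper_card hT; lia.
Qed.

Lemma junta_dep N K (f : {ffun input N -> bool}) :
  (K <= N)%N -> junta K f = (#|dep f| <= K)%N.
Proof.
move=> hK; apply/idP/idP.
  case/existsP => J /andP[/eqP hJ /forallP hinv].
  have sub : dep f \subset ~: J.
    apply/subsetP => i; rewrite inE => /existsP[x hx]; rewrite inE; apply/negP => hiJ.
    by move: (hinv i); rewrite hiJ /= => /forallP /(_ x); rewrite (negbTE hx).
  have := subset_leq_card sub; have := cardsC J; rewrite card_ord hJ; lia.
move=> hd.
have hc : (N - K <= #|~: dep f|)%N by have := cardsC (dep f); rewrite card_ord; lia.
have : (0 < #|[set A : {set 'I_N} | A \subset ~: dep f & #|A| == N - K]|)%N.
  by rewrite cards_draws bin_gt0.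
rewrite card_gt0 => /set0Pn [J]; rewrite inE => /andP[hsub hJ].
apply/existsP; exists J; rewrite hJ /=; apply/forallP => j; apply/implyP => hj.
apply/forallP => x.
have hnd : j \notin dep f by have := subsetP hsub j hj; rewrite inE.
by rewrite (notdep x hnd).
Qed.

Lemma count_junta N K : (K <= N)%N ->
  #|[set f : {ffun input N -> bool} | junta K f]|%:Z = \sum_(k < K.+1) ('C(N, k))%:Z * ecnt k.
Proof.
move=> hK.
have -> : [set f : {ffun input N -> bool} | junta K f] =
          [set f | (fun T : {set 'I_N} => (#|T| <= K)%N) (dep f)].
  by apply/setP => f; rewrite !inE junta_dep.
rewrite (card_part (fun T : {set 'I_N} => (#|T| <= K)%N)) Posz_sum.
under eq_bigr => T _ do rewrite bcnt_e.
rewrite (@sum_by_card N (fun T : {set 'I_N} => (#|T| <= K)%N) K ecnt) //.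
apply: eq_bigr => t _; congr (Posz _ * _).
transitivity #|[set T : {set 'I_N} | #|T| == t]|.
  apply: eq_card => T; rewrite !inE; case: eqP => [->|]; last by rewrite andbF.
  by rewrite -ltnS ltn_ord.
by rewrite card_draws card_ord.
Qed.

Lemma inC_ext (R : realType) N K (P P' : behavior R N) :
  (forall a x, P a x = P' a x) -> inC K P -> inC K P'.
Proof.
move=> E [[h1 h2] [q [g [hqg [hs hP]]]]]; split.
  by split=> [a x|x]; rewrite -?E.
by exists q, g; split => //; split => // a x; rewrite -E.
Qed.

Lemma inC_of (R : realType) N K (q : {ffun 'I_K -> 'I_N} -> R)
  (g : {ffun 'I_K -> 'I_N} -> bool -> {ffun 'I_K -> bool} -> R) :
  (forall j, distinctIdx j ->
        0 <= q j /\ (forall a y, 0 <= g j a y) /\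
        (forall y, g j false y + g j true y = 1)) ->
  \sum_(j | distinctIdx j) q j = 1 ->
  inC K (fun a x => \sum_(j | distinctIdx j) q j * g j a (restr j x)).
Proof.
move=> hqg hs; split; last by exists q, g.
split=> [a x|x].
  apply: sumr_ge0 => j hj; have [h1 [h2 _]] := hqg j hj; exact: mulr_ge0.
rewrite -big_split /= -hs; apply: eq_bigr => j hj.
by rewrite -mulrDr (hqg j hj).2.2 mulr1.
Qed.

Lemma inC_single (R : realType) N K (j0 : {ffun 'I_K -> 'I_N})
  (h : bool -> {ffun 'I_K -> bool} -> R) :
  distinctIdx j0 -> (forall a y, 0 <= h a y) -> (forall y, h false y + h true y = 1) ->
  inC K (fun a x => h a (restr j0 x)).
Proof.
move=> hd h0 h1.
apply: (@inC_ext _ _ _ (fun a x => \sum_(j | distinctIdx j) (j == j0)%:R * (fun _ => h) j a (restr j x))).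
  move=> a x /=; rewrite (bigD1 j0) //= big1 ?eqxx ?mul1r ?addr0 //.
  by move=> j /andP[_ /negbTE ->]; rewrite mul0r.
apply: (inC_of (q := fun j => (j == j0)%:R) (g := fun _ => h)).
  by move=> j _; split; [rewrite ler0n|split].
rewrite (bigD1 j0) //= big1 ?eqxx ?addr0 //.
by move=> j /andP[_ /negbTE ->].
Qed.

Lemma detbeh_ext (R : realType) N (f : {ffun input N -> bool}) (P1 P2 : behavior R N) t :
  inL P1 -> inL P2 -> 0 < t < 1 ->
  (forall a x, @detbeh R N f a x = t * P1 a x + (1 - t) * P2 a x) ->
  forall a x, P1 a x = P2 a x.
Proof.
move=> [h1 s1] [h2 s2] /andP[t0 t1] E a x.
have := E a x; rewrite /detbeh.
have u1 : P1 a x <= 1 by have := s1 x; have := h1 (~~ a) x; case: (a) => /=; lra.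
have u2 : P2 a x <= 1 by have := s2 x; have := h2 (~~ a) x; case: (a) => /=; lra.
have := h1 a x; have := h2 a x.
case: eqP => _ p2 p1 e.
  have : (1 - t) * (1 - P2 a x) >= 0 by apply: mulr_ge0; lra.
  have : t * (1 - P1 a x) >= 0 by apply: mulr_ge0; lra.
  nra.
have : (1 - t) * P2 a x >= 0 by apply: mulr_ge0; lra.
have : t * P1 a x >= 0 by apply: mulr_ge0; lra.
nra.
Qed.

Lemma inC_det (R : realType) N K (f : {ffun input N -> bool}) :
  (K <= N)%N -> junta K f -> inC K (@detbeh R N f).
Proof.
move=> hKN /existsP [J /andP[/eqP hJ /forallP hinv]].
have hK : K = #|~: J| by have := cardsC J; rewrite card_ord; lia.
pose j : {ffun 'I_K -> 'I_N} := [ffun t => enum_val (A := ~: J) (cast_ord hK t)].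
have hj : injective j.
  by move=> t1 t2; rewrite !ffunE => /enum_val_inj /cast_ord_inj.
have hd : distinctIdx j by apply/injectiveP.
have cover : forall i, i \in dep f -> exists t, j t = i.
  move=> i hi.
  have hiJ : i \in ~: J.
    rewrite inE; apply/negP => hiJ; move: hi; rewrite inE => /existsP [x].
    by move: (hinv i); rewrite hiJ /= => /forallP /(_ x) ->.
  exists (cast_ord (esym hK) (enum_rank_in hiJ i)).
  by rewrite ffunE cast_ordKV enum_rankK_in.
apply: (@inC_ext _ _ _ (fun a x => (fun a y => (a == f (ext j y))%:R) a (restr j x))).
  move=> a x /=; rewrite /detbeh -(recon x cover).
  by case: eqP.
apply: (inC_single (h := fun a y => (a == f (ext j y))%:R)) => //.
by move=> y; case: (f (ext j y)); rewrite /= ?add0r ?addr0.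
Qed.

Lemma vertex_det (R : realType) N K (P : behavior R N) :
  vertexC K P -> exists f, junta K f /\ forall a x, P a x = @detbeh R N f a x.
Proof.
move=> [[hL [q [g [hqg [hs hP]]]]] hext].
have [j0 /andP[hd0 hq0]] : exists j0, distinctIdx j0 && (0 < q j0).
  case: (boolP [exists j, distinctIdx j && (0 < q j)]) => [/existsP //|/existsPn hn].
  exfalso; move: hs; rewrite big1 => [|j hj].
    by move/eqP; rewrite eq_sym oner_eq0.
  apply/eqP; rewrite eq_le (hqg j hj).1 andbT leNgt.
  by have := hn j; rewrite hj.
have hj0 : injective j0 by apply/injectiveP.
have [hq0' [hg0 hgs0]] := hqg j0 hd0.
pose G := fun a x => g j0 a (restr j0 x).
have GC : inC K G by apply: inC_single.
pose rest := \sum_(j | distinctIdx j && (j != j0)) q j.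
have hrest : q j0 + rest = 1 by rewrite -hs (bigD1 j0).
have rest0 : 0 <= rest by apply: sumr_ge0 => j /andP[hj _]; exact: (hqg j hj).1.
have hPG : forall a x, P a x = G a x.
  have Psplit : forall a x, P a x = q j0 * G a x +
      \sum_(j | distinctIdx j && (j != j0)) q j * g j a (restr j x).
    by move=> a x; rewrite hP (bigD1 j0).
  case: (eqVneq rest 0) => hr.
    move=> a x; have hq1 : q j0 = 1 by rewrite -hrest hr addr0.
    rewrite Psplit big1 ?addr0 ?hq1 ?mul1r //.
    move=> j hj.
    have hpos : forall j', distinctIdx j' && (j' != j0) -> 0 <= q j'.
      by move=> j' /andP[hj' _]; exact: (hqg j' hj').1.
    by rewrite (psumr_eq0P hpos hr hj) mul0r.
  have rpos : 0 < rest by rewrite lt_def hr rest0.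
  pose q2 := fun j => (j != j0)%:R * q j / rest.
  pose P2 := fun a x => \sum_(j | distinctIdx j) q2 j * g j a (restr j x).
  have hP2 : forall a x, P2 a x * rest =
      \sum_(j | distinctIdx j && (j != j0)) q j * g j a (restr j x).
    move=> a x; rewrite /P2 mulr_suml (bigD1 j0) //= /q2 eqxx !mul0r add0r.
    apply: eq_bigr => j /andP[_ ->]; rewrite mul1r.
    by field.
  have P2C : inC K P2.
    apply: inC_of.
      move=> j hj; split; last exact: (hqg j hj).2.
      apply: mulr_ge0; last by rewrite invr_ge0 ltW.
      by apply: mulr_ge0; [exact: ler0n | exact: (hqg j hj).1].
    rewrite -mulr_suml (bigD1 j0) //= eqxx mul0r add0r.
    rewrite (eq_bigr q) ?divff // => j /andP[_ ->]; by rewrite mul1r.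
  have ht : 0 < q j0 < 1 by apply/andP; split => //; lra.
  have dec : forall a x, P a x = q j0 * G a x + (1 - q j0) * P2 a x.
    move=> a x; rewrite Psplit -hP2.
    have -> : 1 - q j0 = rest by lra.
    by rewrite [rest * _]mulrC.
  have E := hext G P2 (q j0) GC P2C ht dec.
  by move=> a x; rewrite dec -E; ring.
have det : forall y, g j0 false y = 0 \/ g j0 false y = 1.
  move=> y0; have p0 := hg0 false y0.
  have p1 : g j0 false y0 <= 1 by have := hgs0 y0; have := hg0 true y0; lra.
  case: (eqVneq (g j0 false y0) 0) => [->|hn0]; first by left.
  case: (eqVneq (g j0 false y0) 1) => [->|hn1]; first by right.
  exfalso.
  have hp : 0 < g j0 false y0 < 1.
    by apply/andP; split; rewrite lt_def ?p0 ?p1 ?andbT // eq_sym.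
  pose g1 := fun a y => if y == y0 then (a == false)%:R else g j0 a y : R.
  pose g2 := fun a y => if y == y0 then (a == true)%:R else g j0 a y : R.
  have C1 : inC K (fun a x => g1 a (restr j0 x)).
    apply: inC_single => // [a y|y]; rewrite /g1; case: ifP => _ //.
    by rewrite /= addr0.
  have C2 : inC K (fun a x => g2 a (restr j0 x)).
    apply: inC_single => // [a y|y]; rewrite /g2; case: ifP => _ //.
    by rewrite /= add0r.
  have dec : forall a x, P a x = g j0 false y0 * g1 a (restr j0 x) +
                                 (1 - g j0 false y0) * g2 a (restr j0 x).
    move=> a x; rewrite hPG /G /g1 /g2; case: eqP => [->|_]; last by ring.
    case: a => /=; last by ring.
    by have := hgs0 y0; rewrite mulr0 mulr1 add0r; lra.
  have := hext _ _ _ C1 C2 hp dec false (ext j0 y0).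
  by rewrite /= restr_ext // /g1 /g2 eqxx /= => /eqP; rewrite oner_eq0.
pose f : {ffun input N -> bool} := [ffun x => g j0 true (restr j0 x) == 1].
exists f; split.
  apply/existsP; exists (~: [set j0 t | t : 'I_K]); apply/andP; split.
    apply/eqP; have := cardsC [set j0 t | t : 'I_K].
    rewrite card_imset // !card_ord => h; have hKN : (K <= N)%N by rewrite -h leq_addr.
    by apply/eqP; rewrite -(eqn_add2l K) subnKC // h.
  apply/forallP => i; apply/implyP; rewrite inE => hi; apply/forallP => x.
  rewrite !ffunE restr_flip //.
  move=> t; apply: contraNneq hi => <-; exact: imset_f.
move=> a x; rewrite hPG /G /detbeh ffunE.
case: (det (restr j0 x)) => h.
  have := hgs0 (restr j0 x); rewrite h add0r => h1.
  by rewrite h1 eqxx; case: a.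
have := hgs0 (restr j0 x); rewrite h => h1.
have h0 : g j0 true (restr j0 x) = 0 by lra.
by rewrite h0 (eq_sym 0) oner_eq0; case: a.
Qed.

Unset Implicit Arguments.

Theorem mainTheorem1 (R : realType) (N K : nat) :
  (1 <= N)%N -> (1 <= K <= N)%N ->
  (forall P : behavior R N,
     vertexC K P <->
     exists f : {ffun input N -> bool},
       junta K f /\ forall a x, P a x = @detbeh R N f a x)
  /\ injective (fun f : {ffun input N -> bool} => @detbeh R N f)
  /\ (#|[set f : {ffun input N -> bool} | junta K f]|%:Z =
      \sum_(k < K.+1)
         ('C(N, k))%:Z *
         \sum_(r < k.+1) ((-1) ^+ (k - r) * ('C(k, r))%:Z * (2 ^ (2 ^ r))%:Z)).
Proof.
move=> hN /andP[hK1 hKN]; split; [|split].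
- move=> P; split; first exact: vertex_det.
  move=> [f [hj hP]]; split.
    apply: (@inC_ext R N K (@detbeh R N f)); first by move=> a x; rewrite hP.
    exact: inC_det.
  move=> P1 P2 t C1 C2 ht E.
  apply: (@detbeh_ext R N f P1 P2 t C1.1 C2.1 ht) => a x; by rewrite -hP E.
- move=> f1 f2 h; apply/ffunP => x.
  have := congr1 (fun F : behavior R N => F (f1 x) x) h.
  rewrite /detbeh /= eqxx; case: eqP => // _ /eqP; by rewrite oner_eq0.
- exact: count_junta.
Qed.
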